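(* Let $(B,D,d,\theta)$ be a regular E-system, $\mathcal A=\mathcal A_{B\to D}$ its associated Ann-category, $Q$ a ring, and $(F,\breve F,\widetilde F):\mathrm{Dis}\,Q\to\mathcal A$ an Ann-functor. Let $\psi:Q\to\operatorname{Coker}d$ be the ring homomorphism $u\mapsto$ (class of $F(u)$ in $D/\operatorname{Im}d$). Then there exists a ring extension of $B$ by $Q$ of type $B\to D$ inducing $\psi$.
   Context: Bimultiplications of a ring $A$ form the ring $M_A$; $\mu_c$ is the inner bimultiplication $a\mapsto ca$, $a\mapsto ac$; two bimultiplications $\sigma,\tau$ are permutable if $\sigma(a\tau)=(\sigma a)\tau$, $\tau(a\sigma)=(\tau a)\sigma$ for all $a$. E-system $(B,D,d,\theta)$: $B$ a ring, $D$ a unital ring, $d:B\to D$, $\theta:D\to M_B$ ring homomorphisms with $\theta d=\mu$, $d(\theta_xb)=x\,d(b)$, $d(b\theta_x)=d(b)x$; regular if $\theta(1)=1$ and elements of $\theta(D)$ are pairwise permutable. Morphism of E-systems $(f_1,f_0)$: ring homomorphisms with $f_0d=d'f_1$, $f_1(\theta_xb)=\theta'_{f_0(x)}f_1(b)$, $f_1(b\theta_x)=f_1(b)\theta'_{f_0(x)}$. Associated Ann-category $\mathcal A_{B\to D}$: objects elements of $D$, morphisms $x\to y$ the $b\in B$ with $y=d(b)+x$, composition by addition, $\oplus,\otimes$ given by $+,\cdot$ on objects and by $b+b'$, $bb'+b\theta_{x'}+\theta_xb'$ on morphisms $x\xrightarrow{b}y$, $x'\xrightarrow{b'}y'$, all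 constraints identities. $\mathrm{Dis}\,Q$ is the strict Ann-category with objects the elements of $Q$, only identity morphisms, $\oplus,\otimes$ the ring operations. An Ann-functor is a functor with natural isomorphisms $\breve F:F(X\oplus Y)\to FX\oplus FY$, $\widetilde F:F(X\otimes Y)\to FX\otimes FY$ making it symmetric monoidal for $\oplus$, monoidal for $\otimes$, compatible with distributivity constraints. A ring extension of $B$ by $Q$ of type $B\to D$ is an exact sequence of ring homomorphisms $0\to B\xrightarrow{j}E\xrightarrow{p}Q\to0$ together with a ring homomorphism $\varepsilon:E\to D$ such that $(B,E,j,\theta')$ is an E-system with $\theta'$ of bimultiplication type ($\theta'_e b=eb$, $b\theta'_e=be$ computed in $E$, $B$ identified with $j(B)$) and $(\mathrm{id}_B,\varepsilon)$ is a morphism of E-systems $(B,E,j,\theta')\to(B,D,d,\theta)$. It induces the unique ring homomorphism $\psi:Q\to\operatorname{Coker}d$ with $\psi\circ p=q\circ\varepsilon$, $q:D\to\operatorname{Coker}d=D/\operatorname{Im}d$ the projection. *)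

(* Defs.v *)
(* Non-unital ring B = zmodType + explicit multiplication;
   unital rings D, Q, E = pzRingType (unital, 1 = 0 allowed). *)
From HB Require Import structures.
From mathcomp Require Import all_boot all_algebra.
Set Implicit Arguments. Unset Strict Implicit. Unset Printing Implicit Defensive.
Import GRing.Theory.
Local Open Scope ring_scope.

Definition nuring_axioms (B : zmodType) (mulB : B -> B -> B) : Prop :=
  (forall a b c, mulB a (mulB b c) = mulB (mulB a b) c) /\
  (forall a b c, mulB a (b + c) = mulB a b + mulB a c) /\
  (forall a b c, mulB (a + b) c = mulB a c + mulB b c).

Definition additive_map (U V : zmodType) (f : U -> V) : Prop :=
  forall a b, f (a + b) = f a + f b.

(* ring homomorphism from the (non-unital) ring (B,mulB) to a ring D
   (no unit condition: homomorphisms need not preserve 1) *)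
Definition nuring_hom (B : zmodType) (mulB : B -> B -> B) (D : pzRingType)
  (f : B -> D) : Prop :=
  additive_map f /\ forall a b, f (mulB a b) = f a * f b.

Definition ring_hom (R S : pzRingType) (f : R -> S) : Prop :=
  additive_map f /\ forall a b, f (a * b) = f a * f b.

(* (sl, sr) is a bimultiplication of B: sl a = "sigma a", sr a = "a sigma" *)
Definition is_bimult (B : zmodType) (mulB : B -> B -> B) (sl sr : B -> B) : Prop :=
  additive_map sl /\ additive_map sr /\
  (forall a b, sl (mulB a b) = mulB (sl a) b) /\
  (forall a b, sr (mulB a b) = mulB a (sr b)) /\
  (forall a b, mulB a (sl b) = mulB (sr a) b).

(* theta : D -> M_B is a ring homomorphism, theta_x = (thl x, thr x);
   product in M_B : (st) a = s (t a),  a (st) = (a s) t *)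
Definition theta_hom (B : zmodType) (mulB : B -> B -> B) (D : pzRingType)
  (thl thr : D -> B -> B) : Prop :=
  (forall x, is_bimult mulB (thl x) (thr x)) /\
  (forall x y a, thl (x + y) a = thl x a + thl y a) /\
  (forall x y a, thr (x + y) a = thr x a + thr y a) /\
  (forall x y a, thl (x * y) a = thl x (thl y a)) /\
  (forall x y a, thr (x * y) a = thr y (thr x a)).

Definition E_system (B : zmodType) (mulB : B -> B -> B) (D : pzRingType)
  (d : B -> D) (thl thr : D -> B -> B) : Prop :=
  nuring_axioms mulB /\
  nuring_hom mulB d /\
  theta_hom mulB thl thr /\
  (forall c a, thl (d c) a = mulB c a /\ thr (d c) a = mulB a c) /\
  (forall x b, d (thl x b) = x * d b) /\
  (forall x b, d (thr x b) = d b * x).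

Definition regular_E_system (B : zmodType) (mulB : B -> B -> B) (D : pzRingType)
  (d : B -> D) (thl thr : D -> B -> B) : Prop :=
  E_system mulB d thl thr /\
  (forall a, thl 1 a = a /\ thr 1 a = a) /\
  (forall x y a, thl x (thr y a) = thr y (thl x a) /\
                 thl y (thr x a) = thr x (thl y a)).

Definition Esys_morphism (B : zmodType) (mulB : B -> B -> B) (D : pzRingType)
  (d : B -> D) (thl thr : D -> B -> B)
  (B' : zmodType) (mulB' : B' -> B' -> B') (D' : pzRingType)
  (d' : B' -> D') (thl' thr' : D' -> B' -> B')
  (f1 : B -> B') (f0 : D -> D') : Prop :=
  (forall a b, f1 (a + b) = f1 a + f1 b) /\
  (forall a b, f1 (mulB a b) = mulB' (f1 a) (f1 b)) /\
  ring_hom f0 /\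
  (forall b, f0 (d b) = d' (f1 b)) /\
  (forall x b, f1 (thl x b) = thl' (f0 x) (f1 b)) /\
  (forall x b, f1 (thr x b) = thr' (f0 x) (f1 b)).

(* Ann-functor (F, Fs = F-breve, Fp = F-tilde) : Dis Q -> A_{B->D}.
   A morphism x -> y of A is b with y = d b + x; composition is +,
   identities are 0; (b (x->y)) (x) (b' (x'->y')) = b b' + b theta_x' + theta_x b';
   all constraints are identities in both categories.  Naturality is
   automatic since Dis Q has only identity morphisms. *)
Definition ann_functor (B : zmodType) (mulB : B -> B -> B) (D : pzRingType)
  (d : B -> D) (thl thr : D -> B -> B) (Q : pzRingType)
  (F : Q -> D) (Fs Fp : Q -> Q -> B) : Prop :=
  (* Fs u v : F(u+v) -> F u + F v,  Fp u v : F(uv) -> F u F v *)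
  (forall u v, F u + F v = d (Fs u v) + F (u + v)) /\
  (forall u v, F u * F v = d (Fp u v) + F (u * v)) /\
  (forall u v w, Fs u (v + w) + Fs v w = Fs (u + v) w + Fs u v) /\
  (forall u v, Fs u v = Fs v u) /\
  (* compatibility with unit constraints of (+) : unit iso c : F 0 -> 0 *)
  (exists c, 0 = d c + F 0 /\ (forall u, Fs 0 u + c = 0) /\ (forall u, Fs u 0 + c = 0)) /\
  (forall u v w, Fp u (v * w) + thl (F u) (Fp v w) = Fp (u * v) w + thr (F w) (Fp u v)) /\
  (* compatibility with unit constraints of (x) : unit iso c : F 1 -> 1 *)
  (exists c, 1 = d c + F 1 /\
     (forall u, Fp 1 u + thr (F u) c = 0) /\ (forall u, Fp u 1 + thl (F u) c = 0)) /\
  (forall u v w, Fp u (v + w) + thl (F u) (Fs v w) = Fs (u * v) (u * w) + (Fp u v + Fp u w)) /\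
  (forall u v w, Fp (u + v) w + thr (F w) (Fs u v) = Fs (u * w) (v * w) + (Fp u w + Fp v w)).

Definition ring_extension_of_type (B : zmodType) (mulB : B -> B -> B) (D : pzRingType)
  (d : B -> D) (thl thr : D -> B -> B) (Q E : pzRingType)
  (j : B -> E) (p : E -> Q) (eps : E -> D) : Prop :=
  nuring_hom mulB j /\ ring_hom p /\ ring_hom eps /\
  injective j /\ (forall q, exists e, p e = q) /\
  (forall e, p e = 0 <-> exists b, e = j b) /\
  exists thl' thr' : E -> B -> B,
    (forall e b, j (thl' e b) = e * j b /\ j (thr' e b) = j b * e) /\
    E_system mulB j thl' thr' /\
    Esys_morphism mulB j thl' thr' mulB d thl thr id eps.

(* Main.v *)
From HB Require Import structures.
Require Import Defs.
From mathcomp Require Import all_boot all_algebra.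
Set Implicit Arguments. Unset Strict Implicit. Unset Printing Implicit Defensive.
Import GRing.Theory.
Local Open Scope ring_scope.

Lemma pf_here (V : zmodType) (a r : V) : a + r = a + r. Proof. by []. Qed.
Lemma pf_last (V : zmodType) (a : V) : a = a + 0. Proof. by rewrite addr0. Qed.
Lemma pf_later (V : zmodType) (a y t r : V) : t = a + r -> y + t = a + (y + r).
Proof. by move=> ->; rewrite addrCA. Qed.
Lemma cancelP (V : zmodType) (x s r : V) : s = -x + r -> r = 0 -> x + s = 0.
Proof. by move=> -> ->; rewrite addr0 subrr. Qed.
Lemma cancelN (V : zmodType) (x s r : V) : s = x + r -> r = 0 -> -x + s = 0.
Proof. by move=> -> ->; rewrite addr0 addNr. Qed.
Lemma to_sub0 (V : zmodType) (x y : V) : x - y = 0 -> x = y.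
Proof. by move/eqP; rewrite subr_eq0 => /eqP. Qed.

Ltac pull := first [ exact (@pf_here _ _ _) | exact (@pf_last _ _) | (eapply pf_later; pull) ].
Ltac canc := lazymatch goal with
  | |- 0 = 0 => reflexivity
  | |- - ?x + ?s = 0 => eapply (@cancelN _ x); [pull | canc]
  | |- ?x + ?s = 0 => eapply (@cancelP _ x); [pull | canc]
  end.
Ltac acsolve := apply: to_sub0; rewrite ?opprD ?opprK -?addrA ?addr0 ?add0r ?oppr0 ?addr0; canc.


Lemma additive_opp (U V : zmodType) (f : U -> V) :
  (forall a b, f (a + b) = f a + f b) -> (f 0 = 0) /\ forall a, f (- a) = - f a.
Proof.
move=> H.
have h0 : f 0 = 0.
  by apply: (@addrI _ (f 0)); rewrite -H !addr0.
split=> // a; have : f (-a) + f a = 0 by rewrite -H addNr h0.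
by move/eqP; rewrite addr_eq0 => /eqP.
Qed.

Section Ext.
Variables (B : zmodType) (mulB : B -> B -> B) (D : pzRingType)
  (d : B -> D) (thl thr : D -> B -> B) (Q : pzRingType)
  (F : Q -> D) (Fs Fp : Q -> Q -> B) (c0 c1 : B).
Hypothesis mulA : forall a b c, mulB a (mulB b c) = mulB (mulB a b) c.
Hypothesis mulDr : forall a b c, mulB a (b + c) = mulB a b + mulB a c.
Hypothesis mulDl : forall a b c, mulB (a + b) c = mulB a c + mulB b c.
Hypothesis dD : forall a b, d (a + b) = d a + d b.
Hypothesis dM : forall a b, d (mulB a b) = d a * d b.
Hypothesis thlDr : forall x a b, thl x (a + b) = thl x a + thl x b.
Hypothesis thrDr : forall x a b, thr x (a + b) = thr x a + thr x b.
Hypothesis thlMr : forall x a b, thl x (mulB a b) = mulB (thl x a) b.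
Hypothesis thrMr : forall x a b, thr x (mulB a b) = mulB a (thr x b).
Hypothesis thlrM : forall x a b, mulB a (thl x b) = mulB (thr x a) b.
Hypothesis thlDl : forall x y a, thl (x + y) a = thl x a + thl y a.
Hypothesis thrDl : forall x y a, thr (x + y) a = thr x a + thr y a.
Hypothesis thlM : forall x y a, thl (x * y) a = thl x (thl y a).
Hypothesis thrM : forall x y a, thr (x * y) a = thr y (thr x a).
Hypothesis thld : forall c a, thl (d c) a = mulB c a.
Hypothesis thrd : forall c a, thr (d c) a = mulB a c.
Hypothesis dthl : forall x b, d (thl x b) = x * d b.
Hypothesis dthr : forall x b, d (thr x b) = d b * x.
Hypothesis thl1 : forall a, thl 1 a = a.
Hypothesis thr1 : forall a, thr 1 a = a.
Hypothesis thlr : forall x y a, thl x (thr y a) = thr y (thl x a).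
Hypothesis FsD : forall u v, F u + F v = d (Fs u v) + F (u + v).
Hypothesis FpD : forall u v, F u * F v = d (Fp u v) + F (u * v).
Hypothesis FsA : forall u v w, Fs u (v + w) + Fs v w = Fs (u + v) w + Fs u v.
Hypothesis FsC : forall u v, Fs u v = Fs v u.
Hypothesis c0F : 0 = d c0 + F 0.
Hypothesis Fs0u : forall u, Fs 0 u + c0 = 0.
Hypothesis Fsu0 : forall u, Fs u 0 + c0 = 0.
Hypothesis FpA : forall u v w, Fp u (v * w) + thl (F u) (Fp v w) = Fp (u * v) w + thr (F w) (Fp u v).
Hypothesis c1F : 1 = d c1 + F 1.
Hypothesis Fp1u : forall u, Fp 1 u + thr (F u) c1 = 0.
Hypothesis Fpu1 : forall u, Fp u 1 + thl (F u) c1 = 0.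
Hypothesis distL : forall u v w, Fp u (v + w) + thl (F u) (Fs v w) = Fs (u * v) (u * w) + (Fp u v + Fp u w).
Hypothesis distR : forall u v w, Fp (u + v) w + thr (F w) (Fs u v) = Fs (u * w) (v * w) + (Fp u w + Fp v w).

Lemma mulNB a b : mulB (- a) b = - mulB a b.
Proof. exact: (additive_opp (fun a => mulDl a ^~ b)).2. Qed.
Lemma mul0B b : mulB 0 b = 0.
Proof. exact: (additive_opp (fun a => mulDl a ^~ b)).1. Qed.
Lemma mulBN a b : mulB a (- b) = - mulB a b.
Proof. exact: (additive_opp (mulDr a)).2. Qed.
Lemma mulB0 a : mulB a 0 = 0.
Proof. exact: (additive_opp (mulDr a)).1. Qed.
Lemma thlNr x a : thl x (- a) = - thl x a.
Proof. exact: (additive_opp (thlDr x)).2. Qed.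
Lemma thl0r x : thl x 0 = 0.
Proof. exact: (additive_opp (thlDr x)).1. Qed.
Lemma thrNr x a : thr x (- a) = - thr x a.
Proof. exact: (additive_opp (thrDr x)).2. Qed.
Lemma thr0r x : thr x 0 = 0.
Proof. exact: (additive_opp (thrDr x)).1. Qed.
Lemma thlNl x a : thl (- x) a = - thl x a.
Proof. exact: (additive_opp (fun x y => thlDl x y a)).2. Qed.
Lemma thl0l a : thl 0 a = 0.
Proof. exact: (additive_opp (fun x y => thlDl x y a)).1. Qed.
Lemma thrNl x a : thr (- x) a = - thr x a.
Proof. exact: (additive_opp (fun x y => thrDl x y a)).2. Qed.
Lemma thr0l a : thr 0 a = 0.
Proof. exact: (additive_opp (fun x y => thrDl x y a)).1. Qed.
Lemma dN a : d (- a) = - d a.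
Proof. exact: (additive_opp dD).2. Qed.

Definition expE := (mulDr, mulDl, mulNB, mulBN, mul0B, mulB0, thlDr, thrDr, thlNr, thrNr,
  thl0r, thr0r, thlDl, thrDl, thlNl, thrNl, thl0l, thr0l, thld, thrd, thlM, thrM, thl1, thr1).

Lemma Fadd u v : F (u + v) = F u + F v - d (Fs u v).
Proof. by rewrite FsD addrAC subrr add0r. Qed.
Lemma Fmul u v : F (u * v) = F u * F v - d (Fp u v).
Proof. by rewrite FpD addrAC subrr add0r. Qed.
Lemma F0 : F 0 = - d c0.
Proof. by apply/eqP; rewrite -addr_eq0 addrC -c0F. Qed.
Lemma F1 : F 1 = 1 - d c1.
Proof. by rewrite {1}c1F addrAC subrr add0r. Qed.
Lemma Fsu0' u : Fs u 0 = - c0.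
Proof. by apply/eqP; rewrite -addr_eq0 Fsu0. Qed.
Lemma Fs0u' u : Fs 0 u = - c0.
Proof. by apply/eqP; rewrite -addr_eq0 Fs0u. Qed.
Lemma Fp1u' u : Fp 1 u = - thr (F u) c1.
Proof. by apply/eqP; rewrite -addr_eq0 Fp1u. Qed.
Lemma Fpu1' u : Fp u 1 = - thl (F u) c1.
Proof. by apply/eqP; rewrite -addr_eq0 Fpu1. Qed.
Lemma Fpu0 u : Fp u 0 = c0 - thl (F u) c0.
Proof.
have := distL u 0 0; rewrite !addr0 !GRing.mulr0 Fsu0' thlNr => h.
apply: (@addrI _ (Fp u 0)).
rewrite (_ : Fp u 0 + Fp u 0 = -c0 + (Fp u 0 + Fp u 0) + c0); last by acsolve.
rewrite -h; acsolve.
Qed.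
Lemma Fp0u u : Fp 0 u = c0 - thr (F u) c0.
Proof.
have := distR 0 0 u; rewrite !addr0 !GRing.mul0r Fs0u' thrNr => h.
apply: (@addrI _ (Fp 0 u)).
rewrite (_ : Fp 0 u + Fp 0 u = -c0 + (Fp 0 u + Fp 0 u) + c0); last by acsolve.
rewrite -h; acsolve.
Qed.

Definition ext := (B * Q)%type.
HB.instance Definition _ := Choice.on ext.
Definition eadd (x y : ext) : ext := (x.1 + y.1 + Fs x.2 y.2, x.2 + y.2).
Definition ezero : ext := (c0, 0).
Definition eopp (x : ext) : ext := (c0 - x.1 - Fs x.2 (- x.2), - x.2).
Definition emul (x y : ext) : ext :=
  (mulB x.1 y.1 + thr (F y.2) x.1 + thl (F x.2) y.1 + Fp x.2 y.2, x.2 * y.2).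
Definition eone : ext := (c1, 1).

Lemma eaddA : associative eadd.
Proof.
move=> [a u] [b v] [c w]; rewrite /eadd /=; congr pair; last by rewrite addrA.
have e : Fs u (v + w) = Fs (u + v) w + Fs u v - Fs v w.
  by apply/eqP; rewrite eq_sym subr_eq FsA.
rewrite e; acsolve.
Qed.
Lemma eaddC : commutative eadd.
Proof. by move=> [a u] [b v]; rewrite /eadd /= FsC (addrC a) (addrC u). Qed.
Lemma eadd0 : left_id ezero eadd.
Proof. by move=> [a u]; rewrite /eadd /= Fs0u' add0r; congr pair; acsolve. Qed.
Lemma eaddN : left_inverse ezero eopp eadd.
Proof.
by move=> [a u]; rewrite /eadd /= addNr (FsC (-u)); congr pair; acsolve.
Qed.
HB.instance Definition _ := GRing.isZmodule.Build ext eaddA eaddC eadd0 eaddN.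

Definition expE2 := (mulDr, mulDl, mulNB, mulBN, mul0B, mulB0, thlDr, thrDr, thlNr, thrNr,
  thl0r, thr0r, thlDl, thrDl, thlNl, thrNl, thl0l, thr0l, thld, thrd, thlM, thrM, thl1, thr1,
  mulA, thlMr, thrMr, thlrM, thlr).

Lemma FpA' u v w : Fp u (v * w) = Fp (u * v) w + thr (F w) (Fp u v) - thl (F u) (Fp v w).
Proof. by apply/eqP; rewrite eq_sym subr_eq FpA. Qed.
Lemma distL' u v w : Fp u (v + w) = Fs (u * v) (u * w) + (Fp u v + Fp u w) - thl (F u) (Fs v w).
Proof. by apply/eqP; rewrite eq_sym subr_eq distL. Qed.
Lemma distR' u v w : Fp (u + v) w = Fs (u * w) (v * w) + (Fp u w + Fp v w) - thr (F w) (Fs u v).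
Proof. by apply/eqP; rewrite eq_sym subr_eq distR. Qed.

Lemma emulA : associative emul.
Proof.
move=> [a u] [b v] [c w]; rewrite /emul /=; congr pair; last by rewrite mulrA.
rewrite !Fmul FpA' !expE2; acsolve.
Qed.
Lemma emul1 : left_id eone emul.
Proof.
move=> [a u]; rewrite /emul /= F1 Fp1u' GRing.mul1r !expE2; congr pair; acsolve.
Qed.
Lemma emulr1 : right_id eone emul.
Proof.
move=> [a u]; rewrite /emul /= F1 Fpu1' GRing.mulr1 !expE2; congr pair; acsolve.
Qed.
Lemma emulDl : left_distributive emul eadd.
Proof.
move=> [a u] [b v] [c w]; rewrite /emul /eadd /=; congr pair; last by rewrite mulrDl.
rewrite Fadd distR' !expE2; acsolve.
Qed.
Lemma emulDr : right_distributive emul eadd.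
Proof.
move=> [a u] [b v] [c w]; rewrite /emul /eadd /=; congr pair; last by rewrite mulrDr.
rewrite Fadd distL' !expE2; acsolve.
Qed.

HB.instance Definition _ := GRing.Zmodule_isPzRing.Build ext emulA emul1 emulr1 emulDl emulDr.

Definition ej (b : B) : ext := (b + c0, 0).
Definition ep (x : ext) : Q := x.2.
Definition eeps (x : ext) : D := d x.1 + F x.2.
Definition ethl (e : ext) (b : B) : B := (e * ej b).1 - c0.
Definition ethr (e : ext) (b : B) : B := (ej b * e).1 - c0.

Lemma addE (x y : ext) : x + y = eadd x y. Proof. by []. Qed.
Lemma mulE (x y : ext) : x * y = emul x y. Proof. by []. Qed.

Lemma ej_add a b : ej (a + b) = ej a + ej b.
Proof. rewrite addE /ej /eadd /= Fs0u' addr0; congr pair; acsolve. Qed.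
Lemma ej_mul a b : ej (mulB a b) = ej a * ej b.
Proof.
rewrite mulE /ej /emul /= Fp0u !F0 ; congr pair; last by rewrite GRing.mulr0.
rewrite !expE2; acsolve.
Qed.
Lemma ej_inj : injective ej.
Proof. by move=> a b [] /addIr. Qed.
Lemma ej_ker (e : ext) : e.2 = 0 -> e = ej (e.1 - c0).
Proof. by case: e => a u /= ->; rewrite /ej subrK. Qed.
Lemma ethlE e b : ej (ethl e b) = e * ej b.
Proof.
rewrite /ethl -ej_ker //.
by case: e => a u; rewrite mulE /emul /= GRing.mulr0.
Qed.
Lemma ethrE e b : ej (ethr e b) = ej b * e.
Proof.
rewrite /ethr -ej_ker //.
by case: e => a u; rewrite mulE /emul /= GRing.mul0r.
Qed.

Lemma eeps_add : forall x y, eeps (x + y) = eeps x + eeps y.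
Proof. move=> [a u] [b v]; rewrite /eeps addE /eadd /= !dD Fadd; acsolve. Qed.
Lemma eeps_mul : forall x y, eeps (x * y) = eeps x * eeps y.
Proof.
move=> [a u] [b v]; rewrite /eeps mulE /emul /= !dD dM dthr dthl Fmul.
rewrite !(mulrDl, mulrDr); acsolve.
Qed.

Lemma ethl_val x b : ethl x b = thl (eeps x) b.
Proof.
case: x => a u; rewrite /ethl mulE /ej /emul /eeps /= Fpu0 F0 !expE2; acsolve.
Qed.
Lemma ethr_val x b : ethr x b = thr (eeps x) b.
Proof.
case: x => a u; rewrite /ethr mulE /ej /emul /eeps /= Fp0u F0 !expE2; acsolve.
Qed.

Lemma ext_main : exists (E : pzRingType) (j : B -> E) (p : E -> Q) (eps : E -> D),
    ring_extension_of_type mulB d thl thr j p eps /\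
    (forall e, exists b, eps e = d b + F (p e)).
Proof.
have jD := ej_add; have jM := ej_mul; have jI := ej_inj.
exists ext, ej, ep, eeps; split; last by move=> e; exists e.1.
have jhom : nuring_hom mulB ej by split.
split=> //.
split; first by split.
split; first by split; [exact: eeps_add | exact: eeps_mul].
split=> //.
split; first by move=> q; exists (0, q).
split.
  move=> e; split; first by move=> h; exists (e.1 - c0); exact: ej_ker.
  by case=> b ->.
exists ethl, ethr.
split; first by move=> e b; rewrite ethlE ethrE.
split.
  split; first by split.
  split=> //.
  split.
    split.
      move=> x; split; [|split; [|split; [|split]]].
      - by move=> a b; apply: jI; rewrite jD !ethlE jD mulrDr.
      - by move=> a b; apply: jI; rewrite jD !ethrE jD mulrDl.
      - by move=> a b; apply: jI; rewrite jM !ethlE jM mulrA.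
      - by move=> a b; apply: jI; rewrite jM !ethrE jM mulrA.
      - by move=> a b; apply: jI; rewrite !jM ethlE ethrE mulrA.
    split; first by move=> x y a; apply: jI; rewrite jD !ethlE mulrDl.
    split; first by move=> x y a; apply: jI; rewrite jD !ethrE mulrDr.
    split; first by move=> x y a; apply: jI; rewrite !ethlE mulrA.
    by move=> x y a; apply: jI; rewrite !ethrE mulrA.
  split; first by move=> c a; split; apply: jI; rewrite ?ethlE ?ethrE jM.
  by split; [exact: ethlE | exact: ethrE].
split=> //.
split=> //.
split; first by split; [exact: eeps_add | exact: eeps_mul].
split.
  by move=> b; rewrite /eeps /ej /= F0 dD; acsolve.
by split=> x b; rewrite ?ethl_val ?ethr_val.
Qed.

End Ext.

Theorem mainTheorem7 (B : zmodType) (mulB : B -> B -> B) (D : pzRingType)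
  (d : B -> D) (thl thr : D -> B -> B) (Q : pzRingType)
  (F : Q -> D) (Fs Fp : Q -> Q -> B) :
  regular_E_system mulB d thl thr ->
  ann_functor mulB d thl thr F Fs Fp ->
  exists (E : pzRingType) (j : B -> E) (p : E -> Q) (eps : E -> D),
    ring_extension_of_type mulB d thl thr j p eps /\
    (* induces psi : u |-> class of F u in D / Im d, i.e. psi o p = q o eps *)
    (forall e, exists b, eps e = d b + F (p e)).
Proof.
move=> [[[mA [mDr mDl]] [[dD dM] [[bim [thlDl [thrDl [thlM thrM]]]] [thd [dthl dthr]]]]] [th1 thlr]].
move=> [FsD [FpD [FsA [FsC [[c0 [c0F [Fs0u Fsu0]]] [FpA [[c1 [c1F [Fp1u Fpu1]]] [distL distR]]]]]]]].
have thlDr : forall x a b, thl x (a + b) = thl x a + thl x b by move=> x; case: (bim x).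
have thrDr : forall x a b, thr x (a + b) = thr x a + thr x b by move=> x; case: (bim x) => _ [].
have thlMr : forall x a b, thl x (mulB a b) = mulB (thl x a) b by move=> x; case: (bim x) => _ [_ []].
have thrMr : forall x a b, thr x (mulB a b) = mulB a (thr x b) by move=> x; case: (bim x) => _ [_ [_ []]].
have thlrM : forall x a b, mulB a (thl x b) = mulB (thr x a) b by move=> x; case: (bim x) => _ [_ [_ []]].
apply: (@ext_main B mulB D d thl thr Q F Fs Fp c0 c1) => //.
- by move=> c a; case: (thd c a).
- by move=> c a; case: (thd c a).
- by move=> a; case: (th1 a).
- by move=> a; case: (th1 a).
- by move=> x y a; case: (thlr x y a).
Qed.
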